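(* Let $f:\mathbb{C}^2\to\mathbb{C}$ be a convenient mixed polynomial that is Newton non-degenerate. Then $f$ has an inner Newton non-degenerate boundary.
   Context: A mixed polynomial is $f=\sum c_{\nu,\mu}z^\nu\bar z^\mu$ with $z=(u,v)\in\mathbb{C}^2$, $z^\nu=u^{\nu_1}v^{\nu_2}$, $\bar z^\mu=\bar u^{\mu_1}\bar v^{\mu_2}$, regarded as a real map $\mathbb{R}^4\to\mathbb{R}^2$. $V_f=f^{-1}(0)$; $\Sigma_f$ (critical points) is the set where the real Jacobian has rank $<2$, equivalently the common zeros of $f_u\overline{f_{\bar v}}-\overline{f_{\bar u}}f_v$, $|f_u|^2-|f_{\bar u}|^2$, $|f_v|^2-|f_{\bar v}|^2$ (Wirtinger derivatives). $(\mathbb{C}^* )^2=(\mathbb{C}\setminus\{0\})^2$. Newton data: $\mathrm{supp}(f)=\{\nu+\mu:c_{\nu,\mu}\ne0\}$; $\Gamma_+(f)$ = convex hull of $\bigcup_{w\in\mathrm{supp}(f)}(w+\mathbb{R}^2_{\ge0})$, assumed to have at least one compact 1-face; $\Gamma(f)$ = lattice points on compact faces. $f$ is convenient if $\Gamma(f)$ meets both coordinate axes. For a compact face $\Delta$ (vertex or edge), $f_\Delta$ is the sum of terms with $\nu+\mu\in\Delta$. The compact 1-faces are $\Delta(P_1),\dots,\Delta(P_N)$, $P_i=(p_{i,1},p_{i,2})$ the primitive positive weight vector orthogonal to the edge, ordered so $p_{i,1}/p_{i,2}$ strictly decreases (so $\Delta(P_1)$ is the steepest edge); $f_{P_i}:=f_{\Delta(P_i)}$.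 A vertex is extreme if it lies on exactly one compact 1-face, non-extreme if on two. $f$ is Newton non-degenerate (Oka) if for every compact face $\Delta$ (vertices and edges), $V_{f_\Delta}\cap\Sigma_{f_\Delta}\cap(\mathbb{C}^* )^2=\emptyset$. $f$ has an inner Newton non-degenerate boundary if (i) $f_{P_1}$ has no critical points in $V_{f_{P_1}}\cap\{v\neq0\}$ and $f_{P_N}$ none in $V_{f_{P_N}}\cap\{u\ne0\}$; (ii) for each compact 1-face and non-extreme vertex $\Delta$, $f_\Delta$ has no critical points in $V_{f_\Delta}\cap(\mathbb{C}^* )^2$. *)

(* Defs.v *)
From HB Require Import structures.
From mathcomp Require Import all_boot all_order all_algebra.
From mathcomp Require Import reals realfun.
From mathcomp Require Import complex.
Set Implicit Arguments. Unset Strict Implicit. Unset Printing Implicit Defensive.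
Import Order.TTheory GRing.Theory Num.Theory.
Local Open Scope ring_scope.

(* A mixed polynomial in (u,v) and their conjugates, with complex coefficients
   C = R[i], R the real numbers (any realType).  It is given by a box bound
   [mdeg] and a coefficient function: the term
   [mcoef n1 n2 m1 m2 * u^n1 v^n2 conj(u)^m1 conj(v)^m2]
   is present for n1,n2,m1,m2 < mdeg (coefficients outside the box are
   ignored by every definition below). *)
Record mixpoly (R : realType) := MixPoly {
  mdeg : nat;
  mcoef : nat -> nat -> nat -> nat -> R[i] }.

Section MixedDefs.
Variable R : realType.
Implicit Types (f : mixpoly R) (u v : R[i]).

Definition meval f u v : R[i] :=
  \sum_(n1 < mdeg f) \sum_(n2 < mdeg f) \sum_(m1 < mdeg f) \sum_(m2 < mdeg f)
    mcoef f n1 n2 m1 m2 * u ^+ n1 * v ^+ n2 * (u^*)%C ^+ m1 * (v^*)%C ^+ m2.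

Definition dU f : mixpoly R := MixPoly (mdeg f) (fun n1 n2 m1 m2 =>
  if (n1.+1 < mdeg f)%N then mcoef f n1.+1 n2 m1 m2 *+ n1.+1 else 0).
Definition dUb f : mixpoly R := MixPoly (mdeg f) (fun n1 n2 m1 m2 =>
  if (m1.+1 < mdeg f)%N then mcoef f n1 n2 m1.+1 m2 *+ m1.+1 else 0).
Definition dV f : mixpoly R := MixPoly (mdeg f) (fun n1 n2 m1 m2 =>
  if (n2.+1 < mdeg f)%N then mcoef f n1 n2.+1 m1 m2 *+ n2.+1 else 0).
Definition dVb f : mixpoly R := MixPoly (mdeg f) (fun n1 n2 m1 m2 =>
  if (m2.+1 < mdeg f)%N then mcoef f n1 n2 m1 m2.+1 *+ m2.+1 else 0).

(* the real Jacobian of f : R^4 -> R^2, with real coordinates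
   u = x1 + i y1, v = x2 + i y2, columns d/dx1, d/dy1, d/dx2, d/dy2,
   rows Re f, Im f.  Via Wirtinger calculus:
   df/dx1 = f_u + f_ubar,  df/dy1 = i (f_u - f_ubar), and similarly for v. *)
Definition real_partials f u v : seq R[i] :=
  [:: meval (dU f) u v + meval (dUb f) u v;
      'i%C * (meval (dU f) u v - meval (dUb f) u v);
      meval (dV f) u v + meval (dVb f) u v;
      'i%C * (meval (dV f) u v - meval (dVb f) u v)].

Definition real_jacobian f u v : 'M[R]_(2, 4) :=
  \matrix_(i < 2, j < 4)
    (if i == ord0 then @complex.Re R (nth 0 (real_partials f u v) j)
     else @complex.Im R (nth 0 (real_partials f u v) j)).

Definition critical f u v : Prop := (\rank (real_jacobian f u v) < 2)%N.

Definition in_supp f (a b : nat) : bool :=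
  [exists n1 : 'I_(mdeg f), exists n2 : 'I_(mdeg f),
   exists m1 : 'I_(mdeg f), exists m2 : 'I_(mdeg f),
     [&& mcoef f n1 n2 m1 m2 != 0, (n1 + m1 == a)%N & (n2 + m2 == b)%N]].

Definition wdot (P : nat * nat) (a b : nat) : nat := (P.1 * a + P.2 * b)%N.

(* (a,b) is a point of supp(f) at which the weight P attains its minimum
   d(P) on supp(f) (supp(f) lies in the box [0, 2 mdeg)^2).  For a positive
   weight P the compact face Delta(P) of Gamma_+(f) is the convex hull of
   these points. *)
Definition on_face f (P : nat * nat) (a b : nat) : bool :=
  in_supp f a b &&
  [forall a' : 'I_(2 * mdeg f), forall b' : 'I_(2 * mdeg f),
     in_supp f a' b' ==> (wdot P a b <= wdot P a' b')%N].

Definition pos_weight (P : nat * nat) : Prop := (0 < P.1)%N /\ (0 < P.2)%N.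

Definition restrict f (K : nat -> nat -> bool) : mixpoly R :=
  MixPoly (mdeg f) (fun n1 n2 m1 m2 =>
    if K (n1 + m1)%N (n2 + m2)%N then mcoef f n1 n2 m1 m2 else 0).

Definition face_poly f (P : nat * nat) : mixpoly R := restrict f (on_face f P).

Definition vertex_poly f (w : nat * nat) : mixpoly R :=
  restrict f (fun a b => (a == w.1) && (b == w.2)).

(* P is the primitive positive weight vector of a compact 1-face (edge):
   its face contains two distinct points of supp(f) *)
Definition edge_weight f (P : nat * nat) : Prop :=
  pos_weight P /\ coprime P.1 P.2 /\
  exists a b a' b', on_face f P a b /\ on_face f P a' b' /\ (a, b) <> (a', b').

(* P = P_1 : the edge with maximal ratio p1/p2 (steepest edge) *)
Definition first_edge f (P : nat * nat) : Prop :=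
  edge_weight f P /\ forall Q, edge_weight f Q -> (Q.1 * P.2 <= P.1 * Q.2)%N.

(* P = P_N : the edge with minimal ratio p1/p2 *)
Definition last_edge f (P : nat * nat) : Prop :=
  edge_weight f P /\ forall Q, edge_weight f Q -> (P.1 * Q.2 <= Q.1 * P.2)%N.

Definition nonextreme_vertex f (w : nat * nat) : Prop :=
  exists P Q, edge_weight f P /\ edge_weight f Q /\ P <> Q /\
    on_face f P w.1 w.2 /\ on_face f Q w.1 w.2.

(* (a,b) is a lattice point of Gamma(f): it lies on a compact face
   Delta(P) = conv{points of supp f on the face} (collinear points, so a
   point of the hull lies on a segment between two of them) *)
Definition in_Gamma f (a b : nat) : Prop :=
  exists P, pos_weight P /\
    exists s1 s2 t1 t2 (t : R), on_face f P s1 s2 /\ on_face f P t1 t2 /\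
      0 <= t <= 1 /\
      a%:R = t * s1%:R + (1 - t) * t1%:R /\
      b%:R = t * s2%:R + (1 - t) * t2%:R.

Definition has_compact_edge f : Prop := exists P, edge_weight f P.

Definition convenient f : Prop :=
  (exists a, in_Gamma f a 0) /\ (exists b, in_Gamma f 0 b).

Definition no_crit_zero (g : mixpoly R) (S : R[i] -> R[i] -> Prop) : Prop :=
  forall u v, S u v -> meval g u v = 0 -> ~ critical g u v.

Definition torus u v : Prop := u != 0 /\ v != 0.

(* Newton non-degenerate (Oka): for every compact face Delta (= Delta(P),
   P a positive weight; vertices and edges), f_Delta has no critical point
   in V_{f_Delta} cap (C^* )^2 *)
Definition newton_nondegenerate f : Prop :=
  forall P, pos_weight P -> no_crit_zero (face_poly f P) torus.

Definition inner_nondegenerate_boundary f : Prop :=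
  (forall P, first_edge f P -> no_crit_zero (face_poly f P) (fun u v => v != 0)) /\
  (forall P, last_edge f P -> no_crit_zero (face_poly f P) (fun u v => u != 0)) /\
  (forall P, edge_weight f P -> no_crit_zero (face_poly f P) torus) /\
  (forall w, nonextreme_vertex f w -> no_crit_zero (vertex_poly f w) torus).

End MixedDefs.

(* Main.v *)
Require Import Defs.
From mathcomp Require Import all_boot all_order all_algebra.
From mathcomp Require Import reals realfun.
From mathcomp Require Import complex.
From mathcomp Require Import zify.
Set Implicit Arguments. Unset Strict Implicit. Unset Printing Implicit Defensive.
Import Order.TTheory GRing.Theory Num.Theory.

Lemma coprime_reduce n m : 0 < n -> 0 < m ->
  exists n' m', [/\ 0 < n', 0 < m', coprime n' m' & n' * m = n * m'].
Proof.
move=> n0 m0; set g := gcdn n m.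
have g0 : 0 < g by rewrite gcdn_gt0 n0.
have hn : n %/ g * g = n by rewrite divnK // dvdn_gcdl.
have hm : m %/ g * g = m by rewrite divnK // dvdn_gcdr.
exists (n %/ g), (m %/ g); split.
- by move: n0; rewrite -{1}hn muln_gt0 => /andP[].
- by move: m0; rewrite -{1}hm muln_gt0 => /andP[].
- rewrite /coprime; have : gcdn (n %/ g) (m %/ g) * g = 1 * g.
    by rewrite muln_gcdl hn hm mul1n.
  by move/eqP; rewrite eqn_pmul2r.
- by rewrite mulnC -muln_divCA_gcd.
Qed.

Lemma max_seq (T : eqType) (P : pred T) (r : rel T)
  (tot : forall x y, P x -> P y -> r x y || r y x)
  (tr : forall x y z, P x -> P y -> P z -> r x y -> r y z -> r x z) s :
  s != [::] -> all P s -> exists2 y, y \in s & forall z, z \in s -> r z y.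
Proof.
elim: s => [|x s IH] //= _ /andP[Px Ps].
have rxx : r x x by have := tot x x Px Px; rewrite orbb.
case: s IH Ps => [|x' s'] IH Ps.
  by exists x; rewrite ?inE // => z; rewrite inE => /eqP->.
have [y ys hy] := IH isT Ps.
have Py : P y by apply: (allP Ps).
case/orP: (tot x y Px Py) => hxy.
- exists y; first by rewrite inE ys orbT.
  by move=> z; rewrite inE => /orP[/eqP->|/hy].
- exists x; first by rewrite inE eqxx.
  move=> z; rewrite inE => /orP[/eqP->//|zs].
  apply: (tr z y x) => //; first exact: (allP Ps).
  exact: hy.
Qed.

Lemma tr3 (dx dy dz x1 y1 z1 : nat) : dx*y1<=dy*x1 -> dy*z1 <= dz*y1 -> y1*(dx*z1) <= y1*(dz*x1).
Proof. move=> h1 h2. have a := leq_mul h1 (leqnn z1). have b := leq_mul h2 (leqnn x1). lia. Qed.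

Section Geo.
Variable S : nat -> nat -> bool.
Variable B : nat.
Hypothesis hB : forall a b, S a b -> (a < B) /\ (b < B).

Definition faceS (P : nat * nat) a b :=
  S a b /\ forall a' b', S a' b' -> wdot P a b <= wdot P a' b'.
Definition edgeS P := pos_weight P /\ coprime P.1 P.2 /\
  exists a b a' b', faceS P a b /\ faceS P a' b' /\ (a, b) <> (a', b').

Lemma axis P : edgeS P -> (forall Q, edgeS Q -> Q.1 * P.2 <= P.1 * Q.2) ->
  (exists b, S 0 b) -> exists b0, faceS P 0 b0.
Proof.
case: P => p1 p2 [[/= p10 p20] [_ [xa [xb [_ [_ [[Sx fx] _]]]]]]] hfirst hex.
case: (ex_minnP hex) => b0 Sb0 minb0.
exists b0; split => //.
suff h : wdot (p1, p2) 0 b0 <= wdot (p1, p2) xa xb.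
  by move=> a' b' S'; exact: leq_trans h (fx _ _ S').
rewrite leqNgt; apply/negP => hlt; move: hlt; rewrite /wdot /= => hlt.
have xa0 : 0 < xa.
  case: xa Sx fx hlt => // Sx fx hlt; have := minb0 _ Sx.
  rewrite -(leq_pmul2l p20); lia.
have xbb : xb < b0.
  rewrite ltnNge; apply/negP => h; move: hlt; rewrite -(leq_pmul2l p20) in h; lia.
pose L := [seq ab <- [seq (a, b) | a <- iota 0 B, b <- iota 0 B] |
             [&& S ab.1 ab.2, 0 < ab.1 & ab.2 < b0]].
have inL a b : S a b -> 0 < a -> b < b0 -> (a, b) \in L.
  move=> Sab a0 bb; rewrite mem_filter /= Sab a0 bb /=.
  have [aB bB] := hB Sab.
  by apply/allpairsP; exists (a, b) => /=; rewrite !mem_iota /= aB bB.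
have Lsp ab : ab \in L -> [&& S ab.1 ab.2, 0 < ab.1 & ab.2 < b0].
  by rewrite mem_filter => /andP[].
pose r (x y : nat * nat) := (b0 - x.2) * y.1 <= (b0 - y.2) * x.1.
have xL := inL _ _ Sx xa0 xbb.
have [y yL ymax] : exists2 y, y \in L & forall z, z \in L -> r z y.
  apply: (@max_seq _ (fun ab => 0 < ab.1)).
  - by move=> x y _ _; rewrite /r; apply: leq_total.
  - move=> x y z x0 y0 z0; rewrite /r => h1 h2.
    rewrite -(leq_pmul2l y0).
    exact: tr3 h1 h2.
  - by apply/eqP => hL; move: xL; rewrite hL.
  - by apply/allP => z /Lsp /and3P[].
case: y yL ymax => ya yb yL ymax.
have /and3P[Sy ya0 yb0] := Lsp _ yL.
have ybpos : 0 < b0 - yb by rewrite subn_gt0.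
have [n' [m' [n0 m0 cop hnm]]] := coprime_reduce ybpos ya0.
have key z : z \in L -> (b0 - z.2) * m' <= n' * z.1.
  move=> /ymax; rewrite /r /= => h.
  rewrite -(leq_pmul2l ya0); move: h; rewrite -(leq_pmul2r m0).
  have := congr1 (muln ^~ z.1) hnm; move: (b0 - yb) (b0 - z.2) => D E /= e1 e2.
  lia.
have hQ a' b' : S a' b' -> wdot (n', m') 0 b0 <= wdot (n', m') a' b'.
  move=> Sab; rewrite /wdot /=.
  case: (leqP b0 b') => hb; first by have := leq_mul (leqnn m') hb; lia.
  case: a' Sab => [|a'] Sab; first by have := minb0 _ Sab; lia.
  have := key _ (inL _ _ Sab isT hb); rewrite /=.
  move: (b0 - b') (subnK (ltnW hb)) => d <-; lia.
have hy : wdot (n', m') ya yb = wdot (n', m') 0 b0.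
  rewrite /wdot /=; move: hnm; rewrite /=; move: (b0 - yb) (subnK (ltnW yb0)) => d <- hnm.
rewrite /=; lia.
have fQ0 : faceS (n', m') 0 b0 by split.
have fQy : faceS (n', m') ya yb by split => // a' b' /hQ; rewrite hy.
have eQ : edgeS (n', m').
  split; first by [].
  split; first by [].
  exists 0, b0, ya, yb; split => //; split => //.
  by case=> h; rewrite -h in ya0.
have := hfirst _ eQ; rewrite /=.
have := key _ xL; rewrite /= => h1 h2.
move: hlt (b0 - xb) (subnK (ltnW xbb)) h1 => hlt d hd h1.
rewrite -hd in hlt.
have a1 := leq_mul h1 (leqnn p2).
have a2 := leq_mul h2 (leqnn xa).
have a3 : p1 * xa * m' < p2 * d * m' by rewrite ltn_pmul2r //; lia.
lia.
Qed.
End Geo.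

Section Ana.
Variable R : realType.
Implicit Types (f g h : mixpoly R).
Local Open Scope ring_scope.

Definition eqbox f g := mdeg f = mdeg g /\ forall n1 n2 m1 m2,
  (n1 < mdeg f)%N -> (n2 < mdeg f)%N -> (m1 < mdeg f)%N -> (m2 < mdeg f)%N ->
  mcoef f n1 n2 m1 m2 = mcoef g n1 n2 m1 m2.

Lemma eqbox_trans f g h : eqbox f g -> eqbox g h -> eqbox f h.
Proof.
move=> [e1 h1] [e2 h2]; split; first by rewrite e1.
by move=> *; rewrite h1 // h2 // -e1.
Qed.

Lemma meval_eqbox f g u v : eqbox f g -> meval f u v = meval g u v.
Proof.
case: f g => d c [d' c'] [/= e hc]; subst d'; rewrite /meval /=.
apply: eq_bigr => i _; apply: eq_bigr => j _; apply: eq_bigr => k _.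
by apply: eq_bigr => l _; rewrite hc.
Qed.

Lemma dU_eqbox f g : eqbox f g -> eqbox (dU f) (dU g).
Proof. by move=> [e hc]; split=> //= *; rewrite -e; case: ifP => // ?; rewrite hc. Qed.
Lemma dUb_eqbox f g : eqbox f g -> eqbox (dUb f) (dUb g).
Proof. by move=> [e hc]; split=> //= *; rewrite -e; case: ifP => // ?; rewrite hc. Qed.
Lemma dV_eqbox f g : eqbox f g -> eqbox (dV f) (dV g).
Proof. by move=> [e hc]; split=> //= *; rewrite -e; case: ifP => // ?; rewrite hc. Qed.
Lemma dVb_eqbox f g : eqbox f g -> eqbox (dVb f) (dVb g).
Proof. by move=> [e hc]; split=> //= *; rewrite -e; case: ifP => // ?; rewrite hc. Qed.

Lemma jac_eqbox f g u v : eqbox f g -> real_jacobian f u v = real_jacobian g u v.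
Proof.
move=> e; rewrite /real_jacobian /real_partials.
by rewrite (meval_eqbox _ _ (dU_eqbox e)) (meval_eqbox _ _ (dUb_eqbox e))
  (meval_eqbox _ _ (dV_eqbox e)) (meval_eqbox _ _ (dVb_eqbox e)).
Qed.

Lemma nocrit_eqbox f g S : eqbox f g -> no_crit_zero g S -> no_crit_zero f S.
Proof.
move=> e hg u v Suv; rewrite (meval_eqbox _ _ e) => hz.
by rewrite /critical (jac_eqbox _ _ e); apply: hg.
Qed.

Lemma in_supp_of f n1 n2 m1 m2 :
  (n1 < mdeg f)%N -> (n2 < mdeg f)%N -> (m1 < mdeg f)%N -> (m2 < mdeg f)%N ->
  mcoef f n1 n2 m1 m2 != 0 -> in_supp f (n1 + m1) (n2 + m2).
Proof.
move=> h1 h2 h3 h4 nz; apply/existsP; exists (Ordinal h1); apply/existsP; exists (Ordinal h2).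
apply/existsP; exists (Ordinal h3); apply/existsP; exists (Ordinal h4).
by rewrite /= nz !eqxx.
Qed.

Lemma restrict_eqbox f (K K' : nat -> nat -> bool) :
  (forall a b, in_supp f a b -> K a b = K' a b) ->
  eqbox (Defs.restrict f K) (Defs.restrict f K').
Proof.
move=> hK; split => //= n1 n2 m1 m2 h1 h2 h3 h4.
case: (eqVneq (mcoef f n1 n2 m1 m2) 0) => [->|nz]; first by rewrite !if_same.
by rewrite hK //; apply: in_supp_of.
Qed.

Lemma restrict2 f (K1 K2 : nat -> nat -> bool) :
  eqbox (Defs.restrict (Defs.restrict f K1) K2) (Defs.restrict f (fun a b => K1 a b && K2 a b)).
Proof. by split => //= *; case: (K1 _ _); case: (K2 _ _). Qed.

Definition K0 (a b : nat) := a == 0%N.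
Definition K1 (a b : nat) := b == 0%N.

Lemma meval_u0 g v : meval g 0 v = meval (Defs.restrict g K0) 1 v.
Proof.
rewrite /meval.
apply: eq_bigr => i _; apply: eq_bigr => j _; apply: eq_bigr => k _.
apply: eq_bigr => l _; rewrite conjc0 conjc1 !expr1n !mulr1 /K0.
case: i => [[|i] ?]; case: k => [[|k] ?] /=;
  by rewrite ?addSn ?addnS ?expr0 ?expr0n ?mulr1 ?mulr0 ?mul0r.
Qed.

Lemma meval_v0 g u : meval g u 0 = meval (Defs.restrict g K1) u 1.
Proof.
rewrite /meval.
apply: eq_bigr => i _; apply: eq_bigr => j _; apply: eq_bigr => k _.
apply: eq_bigr => l _; rewrite conjc0 conjc1 !expr1n !mulr1 /K1.
case: j => [[|j] ?]; case: l => [[|l] ?] /=;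
  by rewrite ?addSn ?addnS ?expr0 ?expr0n ?mulr1 ?mulr0 ?mul0r.
Qed.

Lemma meval_zero g u v : (forall n1 n2 m1 m2, mcoef g n1 n2 m1 m2 = 0) -> meval g u v = 0.
Proof.
move=> hz; rewrite /meval big1 // => i _; rewrite big1 // => j _; rewrite big1 // => k _.
by rewrite big1 // => l _; rewrite hz !mul0r.
Qed.


Lemma dV_r0 g : eqbox (dV (Defs.restrict g K0)) (Defs.restrict (dV g) K0).
Proof. by split => //= *; rewrite /K0; case: ifP; case: ifP; rewrite ?mul0rn. Qed.
Lemma dVb_r0 g : eqbox (dVb (Defs.restrict g K0)) (Defs.restrict (dVb g) K0).
Proof. by split => //= *; rewrite /K0; case: ifP; case: ifP; rewrite ?mul0rn. Qed.
Lemma dU_r1 g : eqbox (dU (Defs.restrict g K1)) (Defs.restrict (dU g) K1).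
Proof. by split => //= *; rewrite /K1; case: ifP; case: ifP; rewrite ?mul0rn. Qed.
Lemma dUb_r1 g : eqbox (dUb (Defs.restrict g K1)) (Defs.restrict (dUb g) K1).
Proof. by split => //= *; rewrite /K1; case: ifP; case: ifP; rewrite ?mul0rn. Qed.
Lemma dU_r0 g n1 n2 m1 m2 : mcoef (dU (Defs.restrict g K0)) n1 n2 m1 m2 = 0.
Proof. by rewrite /=; case: ifP => // _; rewrite /K0 ?addnS /= mul0rn. Qed.
Lemma dUb_r0 g n1 n2 m1 m2 : mcoef (dUb (Defs.restrict g K0)) n1 n2 m1 m2 = 0.
Proof. by rewrite /=; case: ifP => // _; rewrite /K0 ?addnS /= mul0rn. Qed.
Lemma dV_r1 g n1 n2 m1 m2 : mcoef (dV (Defs.restrict g K1)) n1 n2 m1 m2 = 0.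
Proof. by rewrite /=; case: ifP => // _; rewrite /K1 ?addnS /= mul0rn. Qed.
Lemma dVb_r1 g n1 n2 m1 m2 : mcoef (dVb (Defs.restrict g K1)) n1 n2 m1 m2 = 0.
Proof. by rewrite /=; case: ifP => // _; rewrite /K1 ?addnS /= mul0rn. Qed.

Definition D0 : 'M[R]_4 := diag_mx (\row_(j < 4) (if (2 <= j)%N then 1 else 0)).
Definition D1 : 'M[R]_4 := diag_mx (\row_(j < 4) (if (j < 2)%N then 1 else 0)).

Lemma jac_u0 g v : real_jacobian (Defs.restrict g K0) 1 v = real_jacobian g 0 v *m D0.
Proof.
apply/matrixP => i j; rewrite /D0 mul_mx_diag.
rewrite [LHS]mxE [in RHS]mxE /real_jacobian mxE [X in _ * X]mxE /real_partials.
rewrite (meval_zero _ _ (dU_r0 g)) (meval_zero _ _ (dUb_r0 g)).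
rewrite (meval_eqbox _ _ (dV_r0 g)) (meval_eqbox _ _ (dVb_r0 g)) -!meval_u0.
case: j => [[|[|[|[|j]]]] hj]; simpl nth; rewrite ?mulr0 ?mulr1 ?addr0 ?subr0 ?mulr0 //;
  by case: (i == ord0).
Qed.

Lemma jac_v0 g u : real_jacobian (Defs.restrict g K1) u 1 = real_jacobian g u 0 *m D1.
Proof.
apply/matrixP => i j; rewrite /D1 mul_mx_diag.
rewrite [LHS]mxE [in RHS]mxE /real_jacobian mxE [X in _ * X]mxE /real_partials.
rewrite (meval_zero _ _ (dV_r1 g)) (meval_zero _ _ (dVb_r1 g)).
rewrite (meval_eqbox _ _ (dU_r1 g)) (meval_eqbox _ _ (dUb_r1 g)) -!meval_v0.
case: j => [[|[|[|[|j]]]] hj]; simpl nth; rewrite ?mulr0 ?mulr1 ?addr0 ?subr0 ?mulr0 //;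
  by case: (i == ord0).
Qed.

Lemma crit_u0 g v : critical g 0 v -> critical (Defs.restrict g K0) 1 v.
Proof. by rewrite /critical jac_u0; apply: leq_ltn_trans; apply: mxrankM_maxl. Qed.
Lemma crit_v0 g u : critical g u 0 -> critical (Defs.restrict g K1) u 1.
Proof. by rewrite /critical jac_v0; apply: leq_ltn_trans; apply: mxrankM_maxl. Qed.

End Ana.

Lemma det_lemma p1 p2 q1 q2 xa xb wa wb : 0 < p1 -> 0 < p2 -> 0 < q1 -> 0 < q2 ->
  coprime p1 p2 -> coprime q1 q2 ->
  p1 * xa + p2 * xb = p1 * wa + p2 * wb -> q1 * xa + q2 * xb = q1 * wa + q2 * wb ->
  xa < wa -> p1 = q1 /\ p2 = q2.
Proof.
move=> p10 p20 q10 q20 cp cq E1 E2 hx.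
move: (wa - xa) (subnKC (ltnW hx)) => e he; rewrite -he in E1 E2 hx.
have e0 : 0 < e by lia.
have hb : wb <= xb.
  rewrite -(leq_pmul2l p20); have : 0 < p1 * e by rewrite muln_gt0 p10. lia.
move: (xb - wb) (subnKC hb) => fb hf; rewrite -hf in E1 E2.
have F1 : p2 * fb = p1 * e by lia.
have F2 : q1 * e = q2 * fb by lia.
have fb0 : 0 < fb.
  have : 0 < p1 * e by rewrite muln_gt0 p10.
  by rewrite -F1 muln_gt0 => /andP[].
have := congr2 muln F1 F2 => F.
have G : p2 * q1 * (fb * e) = p1 * q2 * (fb * e) by lia.
move/eqP: G; rewrite eqn_pmul2r ?muln_gt0 ?e0 ?fb0 // => /eqP G.
have d1 : p1 %| q1.
  by rewrite -(Gauss_dvdr q1 cp) G dvdn_mulr.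
have d2 : q1 %| p1.
  by rewrite -(Gauss_dvdr p1 cq) mulnC -G dvdn_mull.
have e1 : p1 = q1 by apply/eqP; rewrite eqn_dvd d1 d2.
split => //; subst q1.
by apply/eqP; rewrite -(eqn_pmul2r p10) G mulnC.
Qed.

Section Main.
Variable R : realType.
Implicit Types f : mixpoly R.
Local Open Scope ring_scope.

Lemma in_supp_bound f a b : in_supp f a b -> (a < 2 * mdeg f)%N /\ (b < 2 * mdeg f)%N.
Proof.
case/existsP => n1 /existsP [n2 /existsP [m1 /existsP [m2 /and3P [_ /eqP <- /eqP <-]]]].
have := ltn_ord n1; have := ltn_ord n2; have := ltn_ord m1; have := ltn_ord m2.
move=> *; split; lia.
Qed.

Lemma on_faceP f P a b : on_face f P a b <-> faceS (in_supp f) P a b.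
Proof.
rewrite /on_face; split.
- case/andP => Sab /forallP h; split => // a' b' S'.
  have [ha hb] := in_supp_bound S'.
  exact: (implyP (forallP (h (Ordinal ha)) (Ordinal hb)) S').
- case => Sab h; rewrite Sab; apply/forallP => a'; apply/forallP => b'.
  by apply/implyP => S'; apply: h.
Qed.

Lemma edgeP f P : edge_weight f P <-> edgeS (in_supp f) P.
Proof.
split; case=> pP [cP [a [b [a' [b' [h1 [h2 h3]]]]]]]; split => //; split => //;
  exists a, b, a', b'; (split; [|split]) => //; by apply/on_faceP.
Qed.

Lemma gamma_axis (s t : nat) (c : R) : 0 <= c <= 1 ->
  ((0%N)%:R : R) = c * s%:R + (1 - c) * t%:R -> s = 0%N \/ t = 0%N.
Proof.
move=> /andP[c0 c1] e.
have h1 : 0 <= c * s%:R by rewrite mulr_ge0.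
have h2 : 0 <= (1 - c) * t%:R by rewrite mulr_ge0 // subr_ge0.
move/eqP: e; rewrite eq_sym paddr_eq0 // !mulf_eq0 !pnatr_eq0 subr_eq0.
case/andP => /orP[/eqP ec|/eqP ->] /orP[/eqP e1|/eqP ->]; auto.
by exfalso; move: e1; rewrite ec => /eqP; rewrite oner_eq0.
Qed.

Lemma supp_axis_b f b : in_Gamma f 0 b -> exists b', in_supp f 0 b'.
Proof.
case=> P [_ [s1 [s2 [t1 [t2 [t [fs [ft [ht [ea eb]]]]]]]]]].
case: (gamma_axis ht ea) => e; subst.
- by exists s2; case/andP: fs.
- by exists t2; case/andP: ft.
Qed.

Lemma supp_axis_a f a : in_Gamma f a 0 -> exists a', in_supp f a' 0.
Proof.
case=> P [_ [s1 [s2 [t1 [t2 [t [fs [ft [ht [ea eb]]]]]]]]]].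
case: (gamma_axis ht eb) => e; subst.
- by exists s1; case/andP: fs.
- by exists t1; case/andP: ft.
Qed.


Lemma faceS_swap (S : nat -> nat -> bool) (P : nat * nat) a b :
  faceS (fun x y => S y x) (P.2, P.1) a b <-> faceS S P b a.
Proof.
rewrite /faceS /wdot /=; split; case=> Sab h; split => // a' b' S'.
- by have := h b' a' S'; lia.
- by have := h b' a' S'; lia.
Qed.

Lemma edgeS_swap (S : nat -> nat -> bool) (P : nat * nat) :
  edgeS S P -> edgeS (fun x y => S y x) (P.2, P.1).
Proof.
case: P => p1 p2 [[/= p10 p20] [cP [a [b [a' [b' [h1 [h2 h3]]]]]]]].
split; first by split.
split; first by rewrite /= coprime_sym.
exists b, a, b', a'; split; first by apply/(faceS_swap S (p1, p2)).
split; first by apply/(faceS_swap S (p1, p2)).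
by case=> e1 e2; apply: h3; rewrite e1 e2.
Qed.

Lemma vertex_nocrit f w Q : newton_nondegenerate f -> pos_weight Q ->
  (forall a b, in_supp f a b -> on_face f Q a b = (a == w.1) && (b == w.2)) ->
  no_crit_zero (vertex_poly f w) (@torus R).
Proof.
move=> hnd pQ hQ; apply: (nocrit_eqbox _ (hnd Q pQ)).
by apply: restrict_eqbox => a b Sab; rewrite hQ.
Qed.

Lemma axis_face_b f P b0 : pos_weight P -> faceS (in_supp f) P 0 b0 ->
  forall a b, in_supp f a b -> on_face f (P.1.+1, P.2) a b = (a == 0%N) && (b == b0).
Proof.
case: P => p1 p2 [/= p10 p20] [Sb0 hf] a b Sab; apply/idP/idP.
- move/on_faceP => [_ h]; have := h _ _ Sb0; have := hf _ _ Sab.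
  rewrite /wdot /= => h1 h2.
  have a0 : a = 0%N by lia.
  subst a; have : (p2 * b == p2 * b0)%N by apply/eqP; lia.
  by rewrite eqn_pmul2l // eqxx.
- case/andP => /eqP -> /eqP ->; apply/on_faceP; split => // a' b' S'.
  by have := hf _ _ S'; rewrite /wdot /=; lia.
Qed.

Lemma axis_face_a f P a0 : pos_weight P -> faceS (in_supp f) P a0 0 ->
  forall a b, in_supp f a b -> on_face f (P.1, P.2.+1) a b = (a == a0) && (b == 0%N).
Proof.
case: P => p1 p2 [/= p10 p20] [Sa0 hf] a b Sab; apply/idP/idP.
- move/on_faceP => [_ h]; have := h _ _ Sa0; have := hf _ _ Sab.
  rewrite /wdot /= => h1 h2.
  have b0 : b = 0%N by lia.
  subst b; have : (p1 * a == p1 * a0)%N by apply/eqP; lia.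
  by rewrite eqn_pmul2l // andbT.
- case/andP => /eqP -> /eqP ->; apply/on_faceP; split => // a' b' S'.
  by have := hf _ _ S'; rewrite /wdot /=; lia.
Qed.

Lemma rface_u0 f P b0 : pos_weight P -> faceS (in_supp f) P 0 b0 ->
  eqbox (Defs.restrict (face_poly f P) K0) (vertex_poly f (0%N, b0)).
Proof.
case: P => p1 p2 [/= p10 p20] fb.
apply: eqbox_trans (restrict2 _ _ _) _.
apply: restrict_eqbox => a b Sab /=; rewrite /K0.
case: (eqVneq a 0%N) Sab => [-> Sab|]; last by rewrite andbF.
rewrite andbT; apply/idP/idP.
- move/on_faceP => [_ h]; have := h _ _ fb.1; have := fb.2 _ _ Sab.
  rewrite /wdot /= => h1 h2.
  have : (p2 * b == p2 * b0)%N by apply/eqP; lia.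
  by rewrite eqn_pmul2l.
- by move/eqP ->; apply/on_faceP.
Qed.

Lemma rface_v0 f P a0 : pos_weight P -> faceS (in_supp f) P a0 0 ->
  eqbox (Defs.restrict (face_poly f P) K1) (vertex_poly f (a0, 0%N)).
Proof.
case: P => p1 p2 [/= p10 p20] fa.
apply: eqbox_trans (restrict2 _ _ _) _.
apply: restrict_eqbox => a b Sab /=; rewrite /K1.
case: (eqVneq b 0%N) Sab => [-> Sab|]; last by rewrite !andbF.
rewrite !andbT; apply/idP/idP.
- move/on_faceP => [_ h]; have := h _ _ fa.1; have := fa.2 _ _ Sab.
  rewrite /wdot /= => h1 h2.
  have : (p1 * a == p1 * a0)%N by apply/eqP; lia.
  by rewrite eqn_pmul2l.
- by move/eqP ->; apply/on_faceP.
Qed.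

Lemma first_part f : newton_nondegenerate f -> (exists b, in_supp f 0 b) ->
  forall P, first_edge f P -> no_crit_zero (face_poly f P) (fun u v => v != 0).
Proof.
move=> hnd hex P [eP hf] u v vnz hz hc.
have pP := eP.1.
case: (eqVneq u 0) => [u0|unz]; last exact: (hnd P pP u v (conj unz vnz) hz hc).
subst u.
have eS : edgeS (in_supp f) P by apply/edgeP.
have [b0 fb] : exists b0, faceS (in_supp f) P 0 b0.
  apply: (axis (@in_supp_bound f)) => // Q /edgeP; exact: hf.
have pQ : pos_weight (P.1.+1, P.2) by split => //=; case: pP.
have nc := @vertex_nocrit f (0%N, b0) _ hnd pQ (axis_face_b pP fb).
have nc' := nocrit_eqbox (rface_u0 pP fb) nc.
apply: (nc' 1 v).
- by split => //; apply: oner_neq0.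
- by rewrite -meval_u0.
- exact: crit_u0.
Qed.

Lemma last_part f : newton_nondegenerate f -> (exists a, in_supp f a 0) ->
  forall P, last_edge f P -> no_crit_zero (face_poly f P) (fun u v => u != 0).
Proof.
move=> hnd hex P [eP hl] u v unz hz hc.
have pP := eP.1.
case: (eqVneq v 0) => [v0|vnz]; last exact: (hnd P pP u v (conj unz vnz) hz hc).
subst v.
have eS : edgeS (in_supp f) P by apply/edgeP.
have hB' : forall a b, (fun x y => in_supp f y x) a b -> (a < 2 * mdeg f)%N /\ (b < 2 * mdeg f)%N.
  by move=> a b /in_supp_bound [] *; split.
have [a0 fa] : exists a0, faceS (fun x y => in_supp f y x) (P.2, P.1) 0 a0.
  apply: (axis hB').
  - exact: edgeS_swap.
  - case=> q1 q2 /edgeS_swap /= hQ.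
    have := hl (q2, q1) (proj2 (edgeP f (q2, q1)) hQ); rewrite /=; lia.
  - by case: hex => a ha; exists a.
have fa' : faceS (in_supp f) P a0 0 by apply/(faceS_swap (in_supp f) P).
have pQ : pos_weight (P.1, P.2.+1) by split => //=; case: pP.
have nc := @vertex_nocrit f (a0, 0%N) _ hnd pQ (axis_face_a pP fa').
have nc' := nocrit_eqbox (rface_v0 pP fa') nc.
apply: (nc' u 1).
- by split => //; apply: oner_neq0.
- by rewrite -meval_v0.
- exact: crit_v0.
Qed.

Lemma vert_face f P Q w : edge_weight f P -> edge_weight f Q -> P <> Q ->
  on_face f P w.1 w.2 -> on_face f Q w.1 w.2 ->
  forall a b, in_supp f a b ->
    on_face f (P.1 + Q.1, P.2 + Q.2)%N a b = (a == w.1) && (b == w.2).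
Proof.
case: P Q w => p1 p2 [q1 q2] [wa wb] [[/= p10 p20] [cP _]] [[/= q10 q20] [cQ _]] PQ
  /on_faceP [Sw hP] /on_faceP [_ hQ] a b Sab /=.
apply/idP/idP.
- move/on_faceP => [_ h]; have h0 := h _ _ Sw; have h1 := hP _ _ Sab; have h2 := hQ _ _ Sab.
  move: h0 h1 h2; rewrite /wdot /= => h0 h1 h2.
  have E1 : (p1 * a + p2 * b = p1 * wa + p2 * wb)%N by lia.
  have E2 : (q1 * a + q2 * b = q1 * wa + q2 * wb)%N by lia.
  case: (ltngtP a wa) => ha.
  + by exfalso; apply: PQ; have [-> ->] := det_lemma p10 p20 q10 q20 cP cQ E1 E2 ha.
  + by exfalso; apply: PQ; have [-> ->] := det_lemma p10 p20 q10 q20 cP cQ (esym E1) (esym E2) ha.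
  + subst a; rewrite ?eqxx /=.
    have : (p2 * b == p2 * wb)%N by apply/eqP; lia.
    by rewrite eqn_pmul2l.
- case/andP => /eqP -> /eqP ->; apply/on_faceP; split => // a' b' S'.
  by have := hP _ _ S'; have := hQ _ _ S'; rewrite /wdot /=; lia.
Qed.

End Main.

Unset Implicit Arguments. Set Strict Implicit. Set Printing Implicit Defensive.

Theorem mainTheorem4 (R : realType) (f : mixpoly R) :
  has_compact_edge f -> convenient f -> newton_nondegenerate f ->
  inner_nondegenerate_boundary f.
Proof.
move=> _ [[a0 ga] [b0 gb]] hnd.
split; [|split; [|split]].
- by apply: first_part => //; apply: supp_axis_b gb.
- by apply: last_part => //; apply: supp_axis_a ga.
- by move=> P eP; apply: hnd; case: eP.
- move=> w [P [Q [eP [eQ [PQ [wP wQ]]]]]].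
  have pPQ : pos_weight (P.1 + Q.1, P.2 + Q.2)%N.
    by case: eP => [[p1 p2] _]; split; rewrite /= addn_gt0 ?p1 ?p2.
  exact: vertex_nocrit hnd pPQ (vert_face eP eQ PQ wP wQ).
Qed.
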